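(* Let $m,n\in\mathbb{N}$, $q\in(-1,1)\setminus\{0\}$, $\alpha_\pm\in(-1,1)$ and $\beta_\pm\in\mathbb{R}$. Then the operator $H$ defined in the context is self-adjoint in $\ell^2(\Lambda^{(n,m)},\Delta)$, i.e. $\langle H\psi,\phi\rangle_\Delta=\langle\psi,H\phi\rangle_\Delta$ for all $\psi,\phi\in\ell^2(\Lambda^{(n,m)},\Delta)$.
   Context: Let $\Lambda^{(n,m)}=\{\mu\in\mathbb{Z}^n\mid m\ge\mu_1\ge\mu_2\ge\cdots\ge\mu_n\ge0\}$, and for $\mu\in\Lambda^{(n,m)}$ use the conventions $\mu_0\equiv m$, $\mu_{n+1}\equiv 0$. Let $e_1,\dots,e_n$ be the standard unit vectors of $\mathbb{Z}^n$, and $\delta_i=1$ if $i=0$, $\delta_i=0$ otherwise. The $q$-difference Toda hamiltonian $H$ acts on functions $\psi:\Lambda^{(n,m)}\to\mathbb{C}$ by $(H\psi)(\mu)=\bigl(\beta_+(1-q^{m-\mu_1})+\beta_-(1-q^{\mu_n})\bigr)\psi(\mu)+\sum_{1\le i\le n,\ \mu+e_i\in\Lambda^{(n,m)}}(1-\alpha_+q^{m-\mu_1-1})^{\delta_{i-1}}(1-q^{\mu_{i-1}-\mu_i})\psi(\mu+e_i)+\sum_{1\le i\le n,\ \mu-e_i\in\Lambda^{(n,m)}}(1-\alpha_-q^{\mu_n-1})^{\delta_{n-i}}(1-q^{\mu_i-\mu_{i+1}})\psi(\mu-e_i)$. With $(a;q)_0=1$, $(a;q)_l=(1-a)(1-aq)\cdots(1-aq^{l-1})$,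 define the positive weights $\Delta_\mu=\dfrac{(q;q)_m}{(\alpha_+;q)_{m-\mu_1}(\alpha_-;q)_{\mu_n}\prod_{0\le i\le n}(q;q)_{\mu_i-\mu_{i+1}}}$ for $\mu\in\Lambda^{(n,m)}$, and let $\ell^2(\Lambda^{(n,m)},\Delta)$ be the space of functions $\Lambda^{(n,m)}\to\mathbb{C}$ with inner product $\langle\psi,\phi\rangle_\Delta=\sum_{\mu\in\Lambda^{(n,m)}}\psi(\mu)\overline{\phi(\mu)}\Delta_\mu$. *)

(* Defs.v *)
From HB Require Import structures.
From mathcomp Require Import all_boot all_order all_algebra.
From mathcomp Require Import reals.
From mathcomp Require Export complex.
Set Implicit Arguments. Unset Strict Implicit. Unset Printing Implicit Defensive.
Import Order.TTheory GRing.Theory Num.Theory.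
Local Open Scope ring_scope.

(* A point mu of Z^n is a sequence of integers of size n;
   mu_i (1 <= i <= n) is nth 0 mu (i-1).  Extended coordinates with the
   conventions mu_0 = m and mu_{n+1} = 0. *)
Definition coord (m : nat) (mu : seq int) (i : nat) : int :=
  if i == 0%N then m%:Z else nth 0 mu i.-1.

(* Lambda^{(n,m)} : m >= mu_1 >= ... >= mu_n >= 0 *)
Definition inLambda (n m : nat) (mu : seq int) : bool :=
  (size mu == n) && [forall i : 'I_n.+1, coord m mu i.+1 <= coord m mu i].

Definition shiftp (mu : seq int) (k : nat) : seq int :=
  set_nth 0 mu k.-1 (nth 0 mu k.-1 + 1).
Definition shiftm (mu : seq int) (k : nat) : seq int :=
  set_nth 0 mu k.-1 (nth 0 mu k.-1 - 1).

Definition toC (R : rcfType) (x : R) : R[i] := (real_complex R x).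

Definition qpoch (R : pzRingType) (a q : R) (l : nat) : R :=
  \prod_(k < l) (1 - a * q ^+ k).

(* The finite set Lambda^{(n,m)}, enumerated through tuples *)
Definition tup2seq (n m : nat) (t : n.-tuple 'I_m.+1) : seq int :=
  [seq (nat_of_ord x)%:Z | x <- t].

Definition Hop (R : rcfType) (n m : nat) (q ap am bp bm : R)
    (psi : seq int -> R[i]) (mu : seq int) : R[i] :=
  let c := coord m mu in
  toC (bp * (1 - q ^ (m%:Z - c 1%N)) + bm * (1 - q ^ (c n))) * psi mu
  + \sum_(j < n | inLambda n m (shiftp mu j.+1))
      (toC ((if j.+1 == 1%N then 1 - ap * q ^ (m%:Z - c 1%N - 1) else 1)
        * (1 - q ^ (c j - c j.+1)))) * psi (shiftp mu j.+1)
  + \sum_(j < n | inLambda n m (shiftm mu j.+1))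
      (toC ((if j.+1 == n then 1 - am * q ^ (c n - 1) else 1)
        * (1 - q ^ (c j.+1 - c j.+2)))) * psi (shiftm mu j.+1).

(* The weights Delta_mu (exponents are nonnegative on Lambda) *)
Definition Delta (R : rcfType) (n m : nat) (q ap am : R) (mu : seq int) : R :=
  let c := coord m mu in
  qpoch q q m /
  (qpoch ap q `|m%:Z - c 1%N|%N * qpoch am q `|c n|%N
   * \prod_(i < n.+1) qpoch q q `|c i - c i.+1|%N).

Definition innerD (R : rcfType) (n m : nat) (q ap am : R)
    (psi phi : seq int -> R[i]) : R[i] :=
  \sum_(t : n.-tuple 'I_m.+1 | inLambda n m (tup2seq t))
     psi (tup2seq t) * Num.conj (phi (tup2seq t))
     * toC (Delta n m q ap am (tup2seq t)).

(* Main.v *)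
From Pilot Require Import Defs.
From HB Require Import structures.
From mathcomp Require Import all_boot all_order all_algebra.
From mathcomp Require Import reals complex ring zify.
Import Order.TTheory GRing.Theory Num.Theory.
Local Open Scope ring_scope.
Set Implicit Arguments. Unset Strict Implicit.
Import Pilot.Defs.
Section Abs.
Variables (C : numClosedFieldType) (T : eqType) (n : nat) (L : seq T) (P : pred T).
Variables (sp sm : 'I_n -> T -> T).
Hypothesis memL : forall s, (s \in L) = P s.
Hypothesis uniqL : uniq L.
Hypothesis sm_sp : forall j s, P s -> P (sp j s) -> sm j (sp j s) = s.
Hypothesis sp_sm : forall j s, P s -> P (sm j s) -> sp j (sm j s) = s.

Lemma core (G : 'I_n -> T -> T -> C) :
  \sum_(s <- L) \sum_(j < n | P (sp j s)) G j s (sp j s)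
  = \sum_(s <- L) \sum_(j < n | P (sm j s)) G j (sm j s) s.
Proof.
rewrite (eq_bigr (fun s => \sum_(j < n) if P (sp j s) then G j s (sp j s) else 0));
  last by move=> s _; rewrite big_mkcond.
rewrite [RHS](eq_bigr (fun s => \sum_(j < n) if P (sm j s) then G j (sm j s) s else 0));
  last by move=> s _; rewrite big_mkcond.
rewrite exchange_big [RHS]exchange_big; apply: eq_bigr => j _.
rewrite -(big_mkcond (fun s => P (sp j s))) -(big_mkcond (fun s => P (sm j s))) -(big_filter _ (fun s => P (sp j s))) -(big_filter _ (fun s => P (sm j s))). 
have pe : perm_eq [seq s <- L | P (sm j s)] (map (sp j) [seq s <- L | P (sp j s)]).
  apply: uniq_perm; first exact: filter_uniq.
    rewrite map_inj_in_uniq ?filter_uniq // => x y.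
    rewrite !mem_filter !memL => /andP[Hx1 Hx2] /andP[Hy1 Hy2] E.
    by rewrite -(sm_sp Hx2 Hx1) E sm_sp.
  move=> x; apply/idP/idP.
    rewrite mem_filter memL => /andP[H1 H2]; apply/mapP; exists (sm j x).
      by rewrite mem_filter memL sp_sm ?H1 ?H2.
    by rewrite sp_sm.
  case/mapP => t; rewrite mem_filter memL => /andP[H1 H2] ->.
  by rewrite mem_filter memL sm_sp ?H1 ?H2.
rewrite [RHS](perm_big _ pe) big_map; apply: eq_big_seq => s.
by rewrite mem_filter memL => /andP[H1 H2]; rewrite sm_sp.
Qed.

Variables (D : T -> C) (Ap Am : 'I_n -> T -> C) (d : T -> C).
Hypothesis DR : forall s, (D s)^* = D s.
Hypothesis ApR : forall j s, (Ap j s)^* = Ap j s.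
Hypothesis AmR : forall j s, (Am j s)^* = Am j s.
Hypothesis bal : forall j s, P s -> P (sp j s) ->
  Ap j s * d s = Am j (sp j s) * d (sp j s).

Definition Hg (psi : T -> C) s := D s * psi s
  + \sum_(j < n | P (sp j s)) Ap j s * psi (sp j s)
  + \sum_(j < n | P (sm j s)) Am j s * psi (sm j s).

Lemma E1 psi phi :
  \sum_(s <- L) (\sum_(j < n | P (sp j s)) Ap j s * psi (sp j s)) * (phi s)^* * d s
  = \sum_(s <- L) psi s * (\sum_(j < n | P (sm j s)) Am j s * phi (sm j s))^* * d s.
Proof.
under eq_bigr => s _ do rewrite !mulr_suml.
rewrite (core (fun j s t => Ap j s * psi t * (phi s)^* * d s)).
apply: eq_big_seq => s; rewrite memL => Ps.
rewrite rmorph_sum mulr_sumr mulr_suml; apply: eq_bigr => j Psm.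
have h := @bal j (sm j s) Psm; rewrite sp_sm // in h; have {}h := h Ps.
transitivity (psi s * (phi (sm j s))^* * (Ap j (sm j s) * d (sm j s))); first by ring.
by rewrite h rmorphM /= AmR; ring.
Qed.

Lemma E2 psi phi :
  \sum_(s <- L) (\sum_(j < n | P (sm j s)) Am j s * psi (sm j s)) * (phi s)^* * d s
  = \sum_(s <- L) psi s * (\sum_(j < n | P (sp j s)) Ap j s * phi (sp j s))^* * d s.
Proof.
under eq_bigr => s _ do rewrite !mulr_suml.
rewrite -(core (fun j t s => Am j s * psi t * (phi s)^* * d s)).
apply: eq_big_seq => s; rewrite memL => Ps.
rewrite rmorph_sum mulr_sumr mulr_suml; apply: eq_bigr => j Psp.
have h := bal Ps Psp.
transitivity (psi s * (phi (sp j s))^* * (Am j (sp j s) * d (sp j s))); first by ring.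
by rewrite -h rmorphM /= ApR; ring.
Qed.

Lemma selfadj psi phi :
  \sum_(s <- L) Hg psi s * (phi s)^* * d s = \sum_(s <- L) psi s * (Hg phi s)^* * d s.
Proof.
rewrite /Hg.
under eq_bigr => s _ do rewrite !mulrDl.
under [RHS]eq_bigr => s _ do rewrite !rmorphD /= !mulrDr !mulrDl.
rewrite !big_split /= E1 E2 -!addrA; congr (_ + _); last by rewrite addrC.
by apply: eq_bigr => s _; rewrite rmorphM /= DR; ring.
Qed.
End Abs.
Lemma coord_shiftp (m : nat) (s : seq int) (k i : nat) : (0 < k <= size s)%N ->
  coord m (shiftp s k) i = if i == k then coord m s i + 1 else coord m s i.
Proof.
case: k => [|k] //= _; rewrite /coord /shiftp; case: i => [|i] //=.
by rewrite nth_set_nth /= eqSS; case: eqP => [->|].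
Qed.

Lemma coord_shiftm (m : nat) (s : seq int) (k i : nat) : (0 < k <= size s)%N ->
  coord m (shiftm s k) i = if i == k then coord m s i - 1 else coord m s i.
Proof.
case: k => [|k] //= _; rewrite /coord /shiftm; case: i => [|i] //=.
by rewrite nth_set_nth /= eqSS; case: eqP => [->|].
Qed.

Lemma size_shiftp (s : seq int) (k : nat) : (0 < k <= size s)%N -> size (shiftp s k) = size s.
Proof. by case: k => [|k] // /andP[_ h]; rewrite size_set_nth; apply/maxn_idPr. Qed.

Lemma size_shiftm (s : seq int) (k : nat) : (0 < k <= size s)%N -> size (shiftm s k) = size s.
Proof. by case: k => [|k] // /andP[_ h]; rewrite size_set_nth; apply/maxn_idPr. Qed.

Lemma shiftmp (s : seq int) (k : nat) : (0 < k <= size s)%N -> shiftm (shiftp s k) k = s.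
Proof.
move=> hk; apply: (@eq_from_nth _ 0).
  by rewrite size_shiftm ?size_shiftp // size_shiftp.
move=> i _; rewrite /shiftm /shiftp !nth_set_nth /=.
rewrite eqxx addrK nth_set_nth /=; by case: ifP => [/eqP ->|->].
Qed.

Lemma shiftpm (s : seq int) (k : nat) : (0 < k <= size s)%N -> shiftp (shiftm s k) k = s.
Proof.
move=> hk; apply: (@eq_from_nth _ 0).
  by rewrite size_shiftp ?size_shiftm // size_shiftm.
move=> i _; rewrite /shiftm /shiftp !nth_set_nth /=.
rewrite eqxx subrK nth_set_nth /=; by case: ifP => [/eqP ->|->].
Qed.

Lemma inL_size (n m : nat) (s : seq int) : inLambda n m s -> size s = n.
Proof. by case/andP => /eqP. Qed.

Lemma coord_big (m : nat) (s : seq int) (i : nat) : (size s < i)%N -> coord m s i = 0.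
Proof. by case: i => [|i] //= h; rewrite /coord /= nth_default. Qed.

Lemma coord_ge0 (n m : nat) (s : seq int) (i : nat) : inLambda n m s -> 0 <= coord m s i.
Proof.
case/andP => /eqP Hs /forallP H.
have [hi|hi] := leqP i n.+1; last by rewrite coord_big ?Hs // ltnW.
suff: forall d, (d <= n.+1)%N -> 0 <= coord m s (n.+1 - d).
  by move/(_ (n.+1 - i)%N); rewrite subKn // leq_subr => /(_ isT).
elim=> [|d IH] hd; first by rewrite subn0 coord_big ?Hs.
apply: le_trans (IH (ltnW hd)) _.
have := H (inord (n - d)); rewrite inordK; last by lia.
by have -> : (n - d).+1 = (n.+1 - d)%N by lia; have -> : (n - d)%N = (n.+1 - d.+1)%N by lia.
Qed.

Lemma coord_lem (n m : nat) (s : seq int) (i : nat) : inLambda n m s -> coord m s i <= m%:Z.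
Proof.
move=> hL; case/andP: (hL) => /eqP Hs /forallP H.
have [hi|hi] := leqP i n.+1; last by rewrite coord_big ?Hs // ltnW.
elim: i hi => [|i IH] hi; first by [].
apply: le_trans (IH (ltnW hi)).
by have := H (inord i); rewrite inordK.
Qed.

Definition Lam (n m : nat) : seq (seq int) :=
  [seq tup2seq t | t <- enum (fun t : n.-tuple 'I_m.+1 => inLambda n m (tup2seq t))].

Lemma tup2seq_inj n m : injective (@tup2seq n m).
Proof.
move=> t1 t2 h; apply: val_inj; apply: (inj_map (@val_inj _ _ _)).
apply: (inj_map (f := Posz)) => [x y []//|].
by rewrite -!map_comp.
Qed.

Lemma uniq_Lam n m : uniq (Lam n m).
Proof. by rewrite map_inj_uniq ?enum_uniq //; apply: tup2seq_inj. Qed.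

Lemma mem_bounds n m s z : inLambda n m s -> z \in s -> 0 <= z <= m%:Z.
Proof.
move=> hL zs; have -> : z = coord m s (index z s).+1 by rewrite /coord /= nth_index.
by rewrite (coord_ge0 _ hL) (coord_lem _ hL).
Qed.

Lemma mem_Lam n m s : (s \in Lam n m) = inLambda n m s.
Proof.
apply/idP/idP.
  by case/mapP => t; rewrite mem_enum => h ->.
move=> hL; have Hs := inL_size hL.
have hsz : size (map (fun z : int => (inord `|z|%N : 'I_m.+1)) s) == n.
  by rewrite size_map Hs.
have E : tup2seq (Tuple hsz) = s.
  rewrite /tup2seq /= -map_comp; apply: map_id_in => z zs /=.
  have /andP[h0 h1] := mem_bounds hL zs.
  rewrite inordK ?gez0_abs //.
  by rewrite ltnS -(lez_nat) gez0_abs.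
apply/mapP; exists (Tuple hsz) => //.
by rewrite mem_enum; rewrite -E in hL.
Qed.

Lemma innerD_Lam (R : rcfType) n m (q ap am : R) psi phi :
  innerD n m q ap am psi phi =
  \sum_(s <- Lam n m) psi s * Num.conj (phi s) * toC (Delta n m q ap am s).
Proof. rewrite /innerD /Lam big_map big_enum; apply: eq_bigl => t; by []. Qed.

Section Bal.
Variables (R : rcfType) (n m : nat) (q ap am : R).
Hypothesis hq : -1 < q < 1.
Hypothesis hap : -1 < ap < 1.
Hypothesis ham : -1 < am < 1.

Lemma qpochS (x : R) l : qpoch x q l.+1 = qpoch x q l * (1 - x * q ^+ l).
Proof. by rewrite /qpoch big_ord_recr. Qed.

Lemma qpoch_neq0 (x : R) l : -1 < x < 1 -> qpoch x q l != 0.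
Proof.
move=> hx; rewrite /qpoch; apply: (big_ind (fun y => y != 0)); first exact: oner_neq0.
  by move=> y z; apply: mulf_neq0.
move=> i _; rewrite subr_eq0; apply/negP => /eqP h.
have : `|x * q ^+ i| < 1.
  rewrite normrM normrX; apply: le_lt_trans (_ : `|x| < 1); last by rewrite ltr_norml.
  apply: ler_piMr => //; apply: exprn_ile1 => //; by rewrite ltW // ltr_norml.
by rewrite -h normr1 ltxx.
Qed.

Definition Xd (s : seq int) : R :=
  qpoch ap q `|m%:Z - coord m s 1|%N * qpoch am q `|coord m s n|%N
   * \prod_(i < n.+1) qpoch q q `|coord m s i - coord m s i.+1|%N.

Lemma DeltaE s : Delta n m q ap am s = qpoch q q m / Xd s.
Proof. by []. Qed.

Lemma Xd_neq0 s : Xd s != 0.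
Proof.
rewrite /Xd !mulf_neq0 ?qpoch_neq0 //.
apply: (big_ind (fun y => y != 0)); first exact: oner_neq0.
  by move=> y z; apply: mulf_neq0.
by move=> i _; apply: qpoch_neq0.
Qed.


Lemma prod_part (c c' : nat -> int) (j a b : nat) :
  (j < n)%N -> (forall i, c' i = if i == j.+1 then c i + 1 else c i) ->
  c j - c j.+1 = a%:Z -> (0 < a)%N -> c j.+1 - c j.+2 = b%:Z ->
  (\prod_(i < n.+1) qpoch q q `|c' i - c' i.+1|%N) * (1 - q ^+ a)
  = (\prod_(i < n.+1) qpoch q q `|c i - c i.+1|%N) * (1 - q ^+ b.+1).
Proof.
move=> hj cE ha a0 hb.
have hj1 : (j < n.+1)%N by apply: ltnW.
have hne : (inord j.+1 : 'I_n.+1) != inord j by rewrite -val_eqE /= !inordK // eqn_leq ltnn.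
rewrite (bigD1 (inord j)) //= (bigD1 (inord j.+1)) //=.
rewrite [in RHS](bigD1 (inord j)) //= [in RHS](bigD1 (inord j.+1)) //=.
rewrite !inordK //.
have -> : \prod_(i < n.+1 | (i != inord j) && (i != inord j.+1)) qpoch q q `|c' i - c' i.+1|%N
  = \prod_(i < n.+1 | (i != inord j) && (i != inord j.+1)) qpoch q q `|c i - c i.+1|%N.
  apply: eq_bigr => i /andP[h1 h2].
  rewrite -val_eqE /= inordK // in h1; rewrite -val_eqE /= inordK // in h2.
  by rewrite (cE i) (cE i.+1) eqSS (negbTE h1) (negbTE h2).
have f1 : c' j = c j by rewrite cE ifN // eqn_leq ltnn andbF.
have f2 : c' j.+1 = c j.+1 + 1 by rewrite cE eqxx.
have f3 : c' j.+2 = c j.+2 by rewrite cE ifN // eqn_leq ltnn.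
rewrite f1 f2 f3.
have e1 : c j - (c j.+1 + 1) = (a.-1)%:Z by lia.
have e2 : c j.+1 + 1 - c j.+2 = (b.+1)%:Z by lia.
rewrite e1 e2 ha hb /=.
have qa : qpoch q q a = qpoch q q a.-1 * (1 - q * q ^+ a.-1) by rewrite -qpochS prednK.
have ea : q ^+ a = q * q ^+ a.-1 by rewrite -exprS prednK.
rewrite qa ea qpochS exprS; ring.
Qed.

Lemma aux (al be u x p p' ya yb : R) : p' * ya = p * yb ->
  al * (ya * (u * (be * (x * p')))) = be * (yb * (al * (u * (x * p)))).
Proof.
move=> h; transitivity (al * be * u * x * (p' * ya)); first by ring.
by rewrite h; ring.
Qed.

Definition Apc (j : 'I_n) (mu : seq int) : R :=
  (if j.+1 == 1%N then 1 - ap * q ^ (m%:Z - coord m mu 1%N - 1) else 1)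
  * (1 - q ^ (coord m mu j - coord m mu j.+1)).
Definition Amc (j : 'I_n) (mu : seq int) : R :=
  (if j.+1 == n then 1 - am * q ^ (coord m mu n - 1) else 1)
  * (1 - q ^ (coord m mu j.+1 - coord m mu j.+2)).

Lemma bal_conc (j : 'I_n) s : inLambda n m s -> inLambda n m (shiftp s j.+1) ->
  Apc j s * Delta n m q ap am s
  = Amc j (shiftp s j.+1) * Delta n m q ap am (shiftp s j.+1).
Proof.
move=> hL hL'.
have Hs := inL_size hL.
have hk : (0 < j.+1 <= size s)%N by rewrite Hs ltn_ord.
have cE := fun i => coord_shiftp m i hk.
have g := fun i => coord_ge0 i hL.
have gm := fun i => coord_lem i hL.
have h1 : coord m s j.+1 + 1 <= coord m s j.
  case/andP: hL' => _ /forallP /(_ (inord j)).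
  rewrite inordK; last exact: leq_trans (ltn_ord j) (leqnSn n).
  by rewrite !cE eqxx ifN // eqn_leq ltnn andbF.
have h2 : coord m s j.+2 <= coord m s j.+1.
  case/andP: hL => _ /forallP /(_ (inord j.+1)).
  by rewrite inordK // ltnS.
pose a := `|coord m s j - coord m s j.+1|%N.
have ha : coord m s j - coord m s j.+1 = a%:Z by rewrite /a gez0_abs // subr_ge0; lia.
have a0 : (0 < a)%N by rewrite -ltz_nat -ha; lia.
pose b := `|coord m s j.+1 - coord m s j.+2|%N.
have hb : coord m s j.+1 - coord m s j.+2 = b%:Z by rewrite /b gez0_abs // subr_ge0.
have Pap : (if j.+1 == 1%N then 1 - ap * q ^ (m%:Z - coord m s 1%N - 1) else 1)
    * qpoch ap q `|m%:Z - coord m (shiftp s j.+1) 1|%N = qpoch ap q `|m%:Z - coord m s 1|%N.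
  have [j0|j0] := eqVneq j.+1 1%N.
    have j0' : (j : nat) = 0%N by case: j0.
    rewrite cE j0 !eqxx.
    pose A := `|m%:Z - coord m s 1|%N.
    have hA : m%:Z - coord m s 1 = A%:Z by rewrite /A gez0_abs // subr_ge0.
    have A0 : (0 < A)%N.
      rewrite -ltz_nat -hA; move: h1; rewrite j0' /=.
      rewrite /coord /=; lia.
    have e1 : m%:Z - (coord m s 1 + 1) = (A.-1)%:Z by lia.
    have e2 : m%:Z - coord m s 1 - 1 = (A.-1)%:Z by lia.
    rewrite e1 e2 hA /= -[in RHS](prednK A0) qpochS -exprnP; ring.
  by rewrite mul1r cE eq_sym (negbTE j0).
have Pam : qpoch am q `|coord m (shiftp s j.+1) n|%N
    = (if j.+1 == n then 1 - am * q ^ (coord m (shiftp s j.+1) n - 1) else 1)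
      * qpoch am q `|coord m s n|%N.
  pose B := `|coord m s n|%N.
  have hB : coord m s n = B%:Z by rewrite /B gez0_abs.
  have [jn|jn] := eqVneq j.+1 n.
    have nE : (n == j.+1) = true by apply/eqP. 
    rewrite !cE nE.
    have e1 : coord m s n + 1 = (B.+1)%:Z by lia.
    have e2 : coord m s n + 1 - 1 = B%:Z by lia.
    rewrite e2 e1 hB /= qpochS -exprnP; ring.
  by rewrite mul1r cE eq_sym (negbTE jn).
have K : Apc j s * Xd (shiftp s j.+1) = Amc j (shiftp s j.+1) * Xd s.
  rewrite /Apc /Amc /Xd.
  have e3 : coord m (shiftp s j.+1) j.+1 - coord m (shiftp s j.+1) j.+2 = (b.+1)%:Z.
    by rewrite !cE eqxx ifN ?eqn_leq ?ltnn //; lia.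
  rewrite ha e3 -!exprnP Pam -Pap.
  have P := @prod_part (coord m s) (coord m (shiftp s j.+1)) j a b (ltn_ord j) cE ha a0 hb.
  rewrite -!mulrA; exact: aux P.
rewrite !DeltaE.
have X1 := Xd_neq0 s; have X2 := Xd_neq0 (shiftp s j.+1).
transitivity (Apc j s * Xd (shiftp s j.+1) * qpoch q q m / (Xd s * Xd (shiftp s j.+1))).
  by field; rewrite X1 X2.
by rewrite K; field; rewrite X1 X2.
Qed.
End Bal.


Lemma toC_real (R : rcfType) (x : R) : Num.conj (toC x) = toC x.
Proof. by rewrite conj_Creal // complex_real. Qed.

Lemma toCM (R : rcfType) (x y : R) : toC (x * y) = toC x * toC y.
Proof. exact: rmorphM. Qed.

Unset Implicit Arguments.
Set Strict Implicit.

Theorem proposition2p1 (R : realType) (m n : nat) (q ap am bp bm : R)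
  (hq0 : q != 0) (hq : -1 < q < 1) (hap : -1 < ap < 1) (ham : -1 < am < 1)
  (psi phi : seq int -> R[i]) :
  innerD n m q ap am (Hop n m q ap am bp bm psi) phi
  = innerD n m q ap am psi (Hop n m q ap am bp bm phi).
Proof.
rewrite !innerD_Lam.
have memL := @mem_Lam n m.
have uL := uniq_Lam n m.
have smsp : forall (j : 'I_n) s, inLambda n m s -> inLambda n m (shiftp s j.+1) ->
    shiftm (shiftp s j.+1) j.+1 = s.
  by move=> j s hs _; apply: shiftmp; rewrite (inL_size hs) ltn_ord.
have spsm : forall (j : 'I_n) s, inLambda n m s -> inLambda n m (shiftm s j.+1) ->
    shiftp (shiftm s j.+1) j.+1 = s.
  by move=> j s hs _; apply: shiftpm; rewrite (inL_size hs) ltn_ord.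
have bal : forall (j : 'I_n) s, inLambda n m s -> inLambda n m (shiftp s j.+1) ->
    toC (Apc m q ap j s) * toC (Delta n m q ap am s)
    = toC (Amc m q am j (shiftp s j.+1)) * toC (Delta n m q ap am (shiftp s j.+1)).
  by move=> j s h1 h2; rewrite -!toCM (bal_conc hq hap ham h1 h2).
exact: (@selfadj (R[i]) _ n (Lam n m) (inLambda n m) (fun j s => shiftp s j.+1)
  (fun j s => shiftm s j.+1) memL uL smsp spsm
  (fun mu => toC (bp * (1 - q ^ (m%:Z - coord m mu 1%N)) + bm * (1 - q ^ (coord m mu n))))
  (fun j s => toC (Apc m q ap j s)) (fun j s => toC (Amc m q am j s))
  (fun s => toC (Delta n m q ap am s))
  (fun s => toC_real _) (fun j s => toC_real _) (fun j s => toC_real _) bal psi phi).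
Qed.
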